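(* Let $n$ be a nonnegative integer and let \[ T_n(a,b,c)=(1+a-c)_n(c)_n\,{}_4F_3\!\left(\left.{-n,\frac{a}{2},\frac{a+1}{2},b \atop a,1+a-c,c}\right|4\right). \] Define \[ U_n(x,y,z)=T_n\!\left(x-y-z,\ \frac{1+3x-y-z-2n}{2},\ \frac{1+x+y-3z}{2}\right). \] Then $U_n$ is a symmetric function of $x,y,z$, i.e. it is invariant under all six permutations of $x,y,z$: \[ U_n(x,y,z)=U_n(x,z,y)=U_n(y,x,z)=U_n(y,z,x)=U_n(z,x,y)=U_n(z,y,x). \] Moreover, these six invariances $U_n(x,y,z)=U_n(x,y,z)$, $U_n(x,y,z)=U_n(x,z,y)$, $U_n(x,y,z)=U_n(y,x,z)$, $U_n(x,y,z)=U_n(y,z,x)$, $U_n(x,y,z)=U_n(z,x,y)$, $U_n(x,y,z)=U_n(z,y,x)$ correspond, respectively, to the following six invariances of $T_n$: \begin{align*} &T_n(a,b,c)=T_n(a,b,c),\\ &T_n(a,b,c)=T_n(a,b,1+a-c),\\ &T_n(a,b,c)=T_n(c-b-n,c-a-n,c),\\ &T_n(a,b,c)=T_n(c-b-n,c-a-n,1-b-n),\\ &T_n(a,b,c)=T_n(1+a-b-c-n,1-c-n,1+a-c),\\ &T_n(a,b,c)=T_n(1+a-b-c-n,1-c-n,1-b-n). \end{align*}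
   Context: Here $(a)_n=a(a+1)\cdots(a+n-1)$ for $n>0$ and $(a)_0=1$ is the rising factorial, and ${}_{p}F_q\!\left(\left.{a_1,\ldots,a_p \atop b_1,\ldots,b_q}\right|z\right)=\sum_{k\ge 0}\frac{(a_1)_k\cdots(a_p)_k}{k!(b_1)_k\cdots(b_q)_k}z^k$ is the generalized hypergeometric series; the ${}_4F_3(4)$ series above terminates since one numerator parameter is $-n$. Denominator parameters are assumed not to be nonpositive integers. The six invariances of $T_n$ listed form a group isomorphic to $S_3$, generated by the trivial invariance $T_n(a,b,c)=T_n(a,b,1+a-c)$ and the nontrivial one $T_n(a,b,c)=T_n(c-b-n,c-a-n,c)$. *)

(* Defs.v *)
(* Parameters live in an arbitrary numFieldType R
   (characteristic-0 field: covers the reals and the complex numbers). *)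
From HB Require Import structures.
From mathcomp Require Import all_boot all_order all_algebra.
Set Implicit Arguments. Unset Strict Implicit. Unset Printing Implicit Defensive.
Import Order.TTheory GRing.Theory Num.Theory.
Local Open Scope ring_scope.

Definition poch (R : numFieldType) (a : R) (k : nat) : R :=
  \prod_(i < k) (a + i%:R).

Definition hyp_term (R : numFieldType) (as_ bs : seq R) (z : R) (k : nat) : R :=
  (\prod_(a <- as_) poch a k) / (k`!%:R * \prod_(b <- bs) poch b k) * z ^+ k.

(* terminating pFq with a numerator parameter -n: all terms with k > n
   vanish (since (-n)_k = 0), so the series is the finite sum over k <= n *)
Definition hypF_term (R : numFieldType) (n : nat) (as_ bs : seq R) (z : R) : R :=
  \sum_(k < n.+1) hyp_term as_ bs z k.

Definition T (R : numFieldType) (n : nat) (a b c : R) : R :=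
  poch (1 + a - c) n * poch c n *
  hypF_term n [:: - n%:R; a / 2; (a + 1) / 2; b] [:: a; 1 + a - c; c] 4.

Definition Uparams (R : numFieldType) (n : nat) (x y z : R) : R * R * R :=
  (x - y - z, (1 + 3 * x - y - z - 2 * n%:R) / 2, (1 + x + y - 3 * z) / 2).

Definition Tt (R : numFieldType) (n : nat) (p : R * R * R) : R :=
  T n p.1.1 p.1.2 p.2.

Definition U (R : numFieldType) (n : nat) (x y z : R) : R :=
  Tt n (Uparams n x y z).

Definition not_npint (R : numFieldType) (r : R) : Prop :=
  forall m : nat, r <> - m%:R.

Definition T_admissible (R : numFieldType) (p : R * R * R) : Prop :=
  let: (a, b, c) := p in
  [/\ not_npint a, not_npint (1 + a - c) & not_npint c].

Definition U_admissible (R : numFieldType) (n : nat) (x y z : R) : Prop :=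
  T_admissible (Uparams n x y z).

Definition phi1 (R : numFieldType) (n : nat) (p : R * R * R) : R * R * R :=
  let: (a, b, c) := p in (a, b, c).
Definition phi2 (R : numFieldType) (n : nat) (p : R * R * R) : R * R * R :=
  let: (a, b, c) := p in (a, b, 1 + a - c).
Definition phi3 (R : numFieldType) (n : nat) (p : R * R * R) : R * R * R :=
  let: (a, b, c) := p in (c - b - n%:R, c - a - n%:R, c).
Definition phi4 (R : numFieldType) (n : nat) (p : R * R * R) : R * R * R :=
  let: (a, b, c) := p in (c - b - n%:R, c - a - n%:R, 1 - b - n%:R).
Definition phi5 (R : numFieldType) (n : nat) (p : R * R * R) : R * R * R :=
  let: (a, b, c) := p in (1 + a - b - c - n%:R, 1 - c - n%:R, 1 + a - c).
Definition phi6 (R : numFieldType) (n : nat) (p : R * R * R) : R * R * R :=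
  let: (a, b, c) := p in (1 + a - b - c - n%:R, 1 - c - n%:R, 1 - b - n%:R).

(* Main.v *)
Require Import Defs.
From HB Require Import structures.
From mathcomp Require Import all_boot all_order all_algebra.
From mathcomp Require Import ring zify.
Set Implicit Arguments. Unset Strict Implicit. Unset Printing Implicit Defensive.
Import Order.TTheory GRing.Theory Num.Theory.
Local Open Scope ring_scope.

Lemma poch0 (R : numFieldType) (x : R) : poch x 0 = 1.
Proof. by rewrite /poch big_ord0. Qed.

Lemma pochS (R : numFieldType) (x : R) k : poch x k.+1 = poch x k * (x + k%:R).
Proof. by rewrite /poch big_ord_recr. Qed.

Lemma pochD (R : numFieldType) (x : R) k m :
  poch x (k + m) = poch x k * poch (x + k%:R) m.
Proof.
rewrite /poch big_split_ord /=; congr (_ * _).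
by apply: eq_bigr => i _; rewrite natrD addrA.
Qed.

Lemma poch1 (R : numFieldType) (x : R) : poch x 1 = x.
Proof. by rewrite pochS poch0 mul1r addr0. Qed.

Lemma poch_neg (R : numFieldType) (x : R) k :
  poch x k = (-1) ^+ k * poch (- x - k%:R + 1) k.
Proof.
elim: k => [|k IH]; first by rewrite !poch0 expr0 mulr1.
rewrite pochS IH -{3}add1n pochD poch1.
have -> : - x - k.+1%:R + 1 + 1%:R = - x - k%:R + 1.
  by rewrite -addn1 natrD; ring.
rewrite exprS; set P := poch _ k.
rewrite -[k.+1]addn1 natrD; ring.
Qed.

Lemma poch_nat (R : numFieldType) m k :
  poch (m.+1)%:R k * m`!%:R = (m + k)`!%:R :> R.
Proof.
elim: k => [|k IH]; first by rewrite poch0 mul1r addn0.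
rewrite pochS mulrAC IH addnS factS natrM -natrD; ring.
Qed.

Lemma poch_half (R : numFieldType) (x : R) k :
  poch (x / 2) k * poch ((x + 1) / 2) k * 4 ^+ k = poch x (k + k).
Proof.
elim: k => [|k IH]; first by rewrite !poch0 expr0 !mul1r.
rewrite addSn addnS !pochS -IH exprS !natrD.
have h2 : (2 : R) != 0 by rewrite pnatr_eq0.
field. by [].
Qed.

Lemma rvdm (R : numFieldType) (x y : R) k :
  poch (x + y) k = \sum_(i < k.+1) 'C(k, i)%:R * poch x i * poch y (k - i).
Proof.
elim: k => [|k IH].
  by rewrite big_ord_recl big_ord0 !poch0 bin0 mul1r mulr1 addr0.
rewrite pochS IH mulr_suml.
have -> : \sum_(i < k.+1) 'C(k, i)%:R * poch x i * poch y (k - i) * (x + y + k%:R)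
   = \sum_(i < k.+1) 'C(k, i)%:R * poch x i.+1 * poch y (k - i)
   + \sum_(i < k.+1) 'C(k, i)%:R * poch x i * poch y (k - i).+1.
  rewrite -big_split /=; apply: eq_bigr => i _.
  have hi : (i <= k)%N by rewrite -ltnS.
  rewrite !pochS natrB //; ring.
rewrite [RHS]big_ord_recl /= bin0 subn0.
have E : forall i : nat, bump 0%N i = i.+1 by [].
under [in RHS]eq_bigr => i _ do rewrite E binS natrD subSS mulrDl mulrDl.
rewrite big_split /= [LHS]addrC addrA; congr (_ + _).
rewrite [LHS]big_ord_recl bin0 subn0 /=; congr (_ + _).
rewrite [RHS]big_ord_recr /= bin_small // mul0r mul0r addr0.
by apply: eq_bigr => i _; rewrite E subnSK.
Qed.

Lemma vdm_shift (R : numFieldType) (c d : R) k :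
  poch (c + d - 1 + k%:R) k =
  \sum_(i < k.+1) 'C(k, i)%:R * poch (c + i%:R) (k - i) * poch (d + (k - i)%:R) i.
Proof.
rewrite poch_neg.
have -> : - (c + d - 1 + k%:R) - k%:R + 1 = (- d - k%:R + 1) + (- c - k%:R + 1) by ring.
rewrite rvdm mulr_sumr; apply: eq_bigr => i _.
have hi : (i <= k)%N by rewrite -ltnS.
rewrite [poch (c + i%:R) _]poch_neg [poch (d + _) i]poch_neg.
have -> : - (c + i%:R) - (k - i)%:R + 1 = - c - k%:R + 1 by rewrite natrB //; ring.
have -> : - (d + (k - i)%:R) - i%:R + 1 = - d - k%:R + 1 by rewrite natrB //; ring.
have -> : (-1) ^+ k = (-1) ^+ (k - i) * (-1) ^+ i :> R by rewrite -exprD subnK.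
ring.
Qed.

Lemma binC3 n i j : (i + j <= n)%N ->
  ('C(n, i + j) * 'C(i + j, i) = 'C(n, i) * 'C(n - i, j))%N.
Proof.
move=> hij.
have hi : (i <= n)%N by apply: leq_trans hij; apply: leq_addr.
have hj : (j <= n - i)%N by rewrite leq_subRL.
have pos : (0 < i`! * j`! * (n - i - j)`!)%N by rewrite !muln_gt0 !fact_gt0.
apply/eqP; rewrite -(eqn_pmul2r pos); apply/eqP.
transitivity (n`!).
  have := bin_fact (leq_addr j i); rewrite addKn => e1.
  have := bin_fact hij; rewrite subnDA => e2.
  rewrite -e2 -e1; ring.
have := bin_fact hj => e1.
have := bin_fact hi => e2.
rewrite -e2 -e1; ring.
Qed.

Lemma tri (R : numFieldType) n (F : nat -> nat -> R) :
  \sum_(k < n.+1) \sum_(0 <= i < k.+1) F k i =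
  \sum_(i < n.+1) \sum_(0 <= j < (n - i).+1) F (i + j)%N i.
Proof.
elim: n => [|n IH].
  by rewrite !big_ord_recr !big_ord0 /= !add0r !big_nat1.
rewrite big_ord_recr /= IH [RHS]big_ord_recr /= subnn big_nat1 addn0.
rewrite [in RHS](eq_bigr (fun i : 'I_n.+1 =>
   \sum_(0 <= j < (n - i).+1) F (i + j)%N i + F n.+1 i)); last first.
  move=> i _; have hi : (i <= n)%N by rewrite -ltnS.
  by rewrite subSn // big_nat_recr //= addnS subnKC.
rewrite big_split /= -addrA; congr (_ + _).
by rewrite big_mkord big_ord_recr.
Qed.

Definition Qs (R : numFieldType) n (f g h : nat -> R) : R :=
  \sum_(k < n.+1) \sum_(0 <= i < k.+1)
     ('C(n, k) * 'C(k, i))%:R * f i * g (k - i)%N * h (n - k)%N.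

Definition R2 (R : numFieldType) n (f g h : nat -> R) : R :=
  \sum_(i < n.+1) \sum_(0 <= j < (n - i).+1)
     ('C(n, i) * 'C(n - i, j))%:R * f i * g j * h (n - i - j)%N.

Lemma Qs_swap12 (R : numFieldType) n (f g h : nat -> R) : Qs n f g h = Qs n g f h.
Proof.
apply: eq_bigr => k _.
rewrite big_nat_rev /=; apply: eq_big_nat => i /andP [_ hi].
rewrite add0n subSS.
have hk : (i <= k)%N by rewrite -ltnS.
rewrite subKn // bin_sub //; ring.
Qed.

Lemma Qs_R2 (R : numFieldType) n (f g h : nat -> R) : Qs n f g h = R2 n f g h.
Proof.
rewrite /Qs (@tri _ n (fun k i => ('C(n, k) * 'C(k, i))%:R * f i * g (k - i)%N * h (n - k)%N)).
apply: eq_bigr => i _; apply: eq_big_nat => j /andP [_ hj].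
have hi := ltn_ord i.
have hij : (i + j <= n)%N by lia.
by rewrite binC3 // addKn subnDA.
Qed.

Lemma R2_swap23 (R : numFieldType) n (f g h : nat -> R) : R2 n f g h = R2 n f h g.
Proof.
apply: eq_bigr => i _.
rewrite big_nat_rev /=; apply: eq_big_nat => j /andP [_ hj].
have hi := ltn_ord i.
rewrite add0n subSS.
have -> : (n - i - (n - i - j) = j)%N by lia.
rewrite bin_sub; last by lia.
ring.
Qed.

Lemma Qs_swap23 (R : numFieldType) n (f g h : nat -> R) : Qs n f g h = Qs n f h g.
Proof. by rewrite !Qs_R2 R2_swap23. Qed.

Definition fp (R : numFieldType) n (x : R) (i : nat) : R := poch (x + i%:R) (n - i).

Definition Pf (R : numFieldType) n (c d e : R) : R :=
  \sum_(k < n.+1) 'C(n, k)%:R * poch (c + d - 1 + k%:R) k * poch (e + (n - k)%:R) k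
     * poch (d + k%:R) (n - k) * poch (c + k%:R) (n - k).

Lemma Pf_Qs (R : numFieldType) n (c d e : R) :
  Pf n c d e = Qs n (fp n c) (fp n d) (fp n e).
Proof.
apply: eq_bigr => k _.
have hk := ltn_ord k.
rewrite vdm_shift big_mkord mulr_sumr !mulr_suml; apply: eq_bigr => i _.
have hi := ltn_ord i.
rewrite /fp.
have -> : (n - i = (k - i) + (n - k))%N by lia.
have -> : (n - (k - i) = i + (n - k))%N by lia.
have -> : (n - (n - k) = k)%N by lia.
rewrite !pochD.
have -> : c + i%:R + (k - i)%:R = c + k%:R by rewrite -addrA -natrD subnKC //; lia.
have -> : d + (k - i)%:R + i%:R = d + k%:R by rewrite -addrA -natrD subnK //; lia.
rewrite natrM; ring.
Qed.

Lemma poch_neq0 (R : numFieldType) (x : R) k : not_npint x -> poch x k != 0.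
Proof.
move=> hx; apply/prodf_neq0 => i _; apply/eqP => e.
by apply: (hx i); rewrite -[x](addrK i%:R) e add0r.
Qed.

Lemma poch_negn (R : numFieldType) n k : (k <= n)%N ->
  poch (- n%:R : R) k = (-1) ^+ k * ('C(n, k)%:R * k`!%:R).
Proof.
move=> hk; rewrite poch_neg opprK.
have -> : n%:R - k%:R + 1 = (n - k).+1%:R :> R by rewrite -addn1 natrD natrB.
congr (_ * _).
have hf : (n - k)`!%:R != 0 :> R by rewrite pnatr_eq0 -lt0n fact_gt0.
apply: (mulIf hf); rewrite poch_nat subnK // -(bin_fact hk) !natrM; ring.
Qed.

Lemma T_Pf (R : numFieldType) n (a b c : R) :
  not_npint a -> not_npint (1 + a - c) -> not_npint c ->
  T n a b c = Pf n c (1 + a - c) (1 - b - n%:R).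
Proof.
move=> ha hd hc.
rewrite /T /hypF_term /Pf mulr_sumr; apply: eq_bigr => k _.
have hk : (k <= n)%N by rewrite -ltnS.
set d := 1 + a - c.
rewrite /hyp_term !big_cons !big_nil !mulr1 [_ / _ * _]mulrAC.
have -> : poch (- n%:R) k * (poch (a / 2) k * (poch ((a + 1) / 2) k * poch b k)) * 4 ^+ k
   = ('C(n, k)%:R * k`!%:R) * poch (1 - b - n%:R + (n - k)%:R) k * (poch a k * poch (a + k%:R) k).
  rewrite -pochD poch_negn // [poch b k]poch_neg.
  have -> : 1 - b - n%:R + (n - k)%:R = - b - k%:R + 1 by rewrite natrB //; ring.
  rewrite -poch_half.
  have hs : (-1) ^+ k * ((-1) ^+ k) = 1 :> R by rewrite -exprMn mulrNN mulr1 expr1n.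
  set s := (-1) ^+ k; set p1 := poch (a / 2) k; set p2 := poch ((a + 1) / 2) k.
  set p3 := poch (- b - k%:R + 1) k.
  transitivity ((s * s) * ('C(n, k)%:R * k`!%:R * p3 * (p1 * p2 * 4 ^+ k))); first by ring.
  by rewrite hs mul1r.
have -> : c + d - 1 + k%:R = a + k%:R by rewrite /d; ring.
have e : forall x : R, poch x n = poch x k * poch (x + k%:R) (n - k).
  by move=> x; rewrite -pochD subnKC.
rewrite !e.
have h1 : poch a k != 0 by apply: poch_neq0.
have h2 : poch d k != 0 by apply: poch_neq0.
have h3 : poch c k != 0 by apply: poch_neq0.
have h4 : k`!%:R != 0 :> R by rewrite pnatr_eq0 -lt0n fact_gt0.
field.
by rewrite h1 h2 h3 h4.
Qed.

Definition w (R : numFieldType) (p q r : R) : R := (1 + p + q - 3 * r) / 2.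

Lemma wC (R : numFieldType) (p q r : R) : w p q r = w q p r.
Proof. by rewrite /w; congr (_ / _); ring. Qed.

Lemma two_neq0 (R : numFieldType) : (2 : R) != 0.
Proof. by rewrite pnatr_eq0. Qed.

Lemma U_Q (R : numFieldType) n (x y z : R) : U_admissible n x y z ->
  U n x y z = Qs n (fp n (w x y z)) (fp n (w x z y)) (fp n (w y z x)).
Proof.
rewrite /U_admissible /U /Tt /Uparams /= => -[ha hd hc].
rewrite T_Pf // Pf_Qs; congr Qs; congr fp.
  by rewrite /w; have := two_neq0 R => ?; field.
by rewrite /w; have := two_neq0 R => ?; field.
Qed.

Lemma Tcongr (R : numFieldType) n (a b c a' b' c' : R) :
  a = a' -> b = b' -> c = c' -> T n a b c = T n a' b' c'.
Proof. by move=> -> -> ->. Qed.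

Theorem theorem3p2 (R : numFieldType) (n : nat) (x y z : R) :
  (* symmetry of U_n, wherever all the 4F3's involved are defined *)
  (U_admissible n x y z -> U_admissible n x z y -> U_admissible n y x z ->
   U_admissible n y z x -> U_admissible n z x y -> U_admissible n z y x ->
   [/\ U n x y z = U n x z y, U n x y z = U n y x z, U n x y z = U n y z x,
       U n x y z = U n z x y & U n x y z = U n z y x]) /\
  (* correspondence: with (a,b,c) = Uparams n x y z, i.e. U n x y z = T_n(a,b,c),
     the permuted value U_n(sigma(x,y,z)) is T_n at the transformed parameters *)
  (let p := Uparams n x y z in
   [/\ U n x y z = Tt n (phi1 n p), U n x z y = Tt n (phi2 n p),
       U n y x z = Tt n (phi3 n p) & U n y z x = Tt n (phi4 n p)] /\
   (U n z x y = Tt n (phi5 n p) /\ U n z y x = Tt n (phi6 n p))).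
Proof.
split.
  move=> h1 h2 h3 h4 h5 h6.
  rewrite !U_Q //.
  rewrite [w z y x]wC [w y x z]wC [w z x y]wC.
  split.
  - by rewrite [LHS]Qs_swap12.
  - by rewrite [LHS]Qs_swap23.
  - by rewrite [LHS]Qs_swap23 [LHS]Qs_swap12.
  - by rewrite [LHS]Qs_swap12 [LHS]Qs_swap23.
  - by rewrite [LHS]Qs_swap12 [LHS]Qs_swap23 [LHS]Qs_swap12.
have h2 := two_neq0 R.
rewrite /U /Tt /Uparams /phi1 /phi2 /phi3 /phi4 /phi5 /phi6 /=.
split; first split; try (by apply: Tcongr; field).
split; by apply: Tcongr; field.
Qed.
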